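(* Let $\mathsf{Prop}=\{p,\bar p\}$ and let $\mathsf{L}'$ be a monotone fragment of $\mathsf{LTL}(\mathsf{Prop})$ with $\mathbf{X}\in\mathsf{Op}'$ and $\mathbf{U}\notin\mathsf{Op}'$ (and containing at least one proposition). For every $n\in\mathbb{N}$ there is a sample $\mathcal{S}=(\mathcal{P},\mathcal{N})$ of words in $\mathcal{W}(\mathsf{Prop})$, each $w\in\mathcal{S}$ written as $w=u_w\cdot v_w^\omega$, such that $k:=\sum_{w\in\mathcal{S}}(|u_w|+|v_w|)\ge n$ and the minimal size of an $\mathcal{S}$-separating $\mathsf{L}'$-formula is larger than $2^{\sqrt{k}}$.
   Context: $\mathsf{LTL}(\mathsf{Prop})$ has operators: each proposition $q\in\mathsf{Prop}$ (arity 0), $\neg,\mathbf{X},\mathbf{F},\mathbf{G}$ (arity 1), $\vee,\wedge,\mathbf{U}$ (arity 2). A fragment is given by a subset $\mathsf{Op}'$ of these operators, its formulas being those built only from operators in $\mathsf{Op}'$. A fragment is monotone if $\neg\notin\mathsf{Op}'$ and at most one of $\vee,\wedge$ is in $\mathsf{Op}'$. $\mathsf{sz}(\varphi)$ is the number of distinct subformulas of $\varphi$. $\mathcal{W}(\mathsf{Prop})=\{u\cdot v^\omega: u,v\in(2^{\mathsf{Prop}})^*,\ u\cdot v\ne\varepsilon\}$, where for $v=\varepsilon$ the word is the finite word $u$. For a word $w$, $|w|\in\mathbb{N}\cup\{\infty\}$ is its length and $w[j:]$ its suffix from position $j$. Semantics: $w\models q$ iff $q\in w[0]$; Boolean connectives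 as usual; $w\models\mathbf{X}\varphi$ iff $|w|\ge2$ and $w[1:]\models\varphi$; $w\models\mathbf{F}\varphi$ iff $\exists j<|w|$, $w[j:]\models\varphi$; $w\models\mathbf{G}\varphi$ iff $\forall j<|w|$, $w[j:]\models\varphi$; $w\models\varphi_1\mathbf{U}\varphi_2$ iff $\exists j<|w|$ with $w[j:]\models\varphi_2$ and $w[k:]\models\varphi_1$ for all $k<j$. A formula is $\mathcal{S}$-separating if it is satisfied by every word of $\mathcal{P}$ and by no word of $\mathcal{N}$. *)

(* Defs.v *)
From Stdlib Require Import Reals List Arith.
Import ListNotations.

Inductive prop : Type := p | pbar.

(* A letter is an element of 2^Prop, given by its characteristic function. *)
Definition letter : Type := prop -> bool.

Inductive ltl : Type :=
  | Atom  : prop -> ltl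
  | Not   : ltl -> ltl
  | Next  : ltl -> ltl
  | Fin   : ltl -> ltl
  | Glob  : ltl -> ltl
  | Or    : ltl -> ltl -> ltl
  | And   : ltl -> ltl -> ltl
  | Until : ltl -> ltl -> ltl.

Scheme Equality for prop.
Scheme Equality for ltl.

Inductive op : Type :=
  | OAtom : prop -> op | ONot | OX | OF | OG | OOr | OAnd | OU.

Fixpoint in_frag (O : op -> Prop) (f : ltl) : Prop :=
  match f with
  | Atom q => O (OAtom q)
  | Not g => O ONot /\ in_frag O g
  | Next g => O OX /\ in_frag O g
  | Fin g => O OF /\ in_frag O g
  | Glob g => O OG /\ in_frag O g
  | Or g h => O OOr /\ in_frag O g /\ in_frag O h
  | And g h => O OAnd /\ in_frag O g /\ in_frag O h
  | Until g h => O OU /\ in_frag O g /\ in_frag O h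
  end.

Definition monotone (O : op -> Prop) : Prop :=
  ~ O ONot /\ ~ (O OOr /\ O OAnd).

Fixpoint subf (f : ltl) : list ltl :=
  f :: match f with
       | Atom _ => []
       | Not g | Next g | Fin g | Glob g => subf g
       | Or g h | And g h | Until g h => subf g ++ subf h
       end.

Definition sz (f : ltl) : nat := length (nodup ltl_eq_dec (subf f)).

(* A word u . v^omega given by the pair (u, v); v = [] means the finite word u. *)
Definition lasso : Type := (list letter * list letter)%type.

Definition valid_lasso (w : lasso) : Prop := fst w ++ snd w <> [].

Definition lt_len (w : lasso) (j : nat) : Prop :=
  match snd w with
  | [] => j < length (fst w)
  | _ :: _ => True
  end.

Definition letter_at (w : lasso) (j : nat) : letter :=
  let (u, v) := w in
  if j <? length u then nth j u (fun _ => false)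
  else nth ((j - length u) mod length v) v (fun _ => false).

Fixpoint sat (w : lasso) (j : nat) (f : ltl) : Prop :=
  match f with
  | Atom q => letter_at w j q = true
  | Not g => ~ sat w j g
  | Next g => lt_len w (S j) /\ sat w (S j) g
  | Fin g => exists i, j <= i /\ lt_len w i /\ sat w i g
  | Glob g => forall i, j <= i -> lt_len w i -> sat w i g
  | Or g h => sat w j g \/ sat w j h
  | And g h => sat w j g /\ sat w j h
  | Until g h => exists i, j <= i /\ lt_len w i /\ sat w i h /\
                   forall k, j <= k -> k < i -> sat w k g
  end.

Definition models (w : lasso) (f : ltl) : Prop := sat w 0 f.

Definition word_eq (w1 w2 : lasso) : Prop :=
  (forall i, lt_len w1 i <-> lt_len w2 i) /\
  (forall i q, lt_len w1 i -> letter_at w1 i q = letter_at w2 i q).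

Fixpoint distinct_words (l : list lasso) : Prop :=
  match l with
  | [] => True
  | w :: l' => Forall (fun w' => ~ word_eq w w') l' /\ distinct_words l'
  end.

Definition separates (P N : list lasso) (f : ltl) : Prop :=
  Forall (fun w => models w f) P /\ Forall (fun w => ~ models w f) N.

Definition sample_size (S : list lasso) : nat :=
  fold_right (fun w acc => length (fst w) + length (snd w) + acc) 0 S.

(* Main.v *)
Require Import Defs.
From Stdlib Require Import Reals List Arith.
From Stdlib Require Import Lia Lra Classical.
Import ListNotations.
Set Warnings "-notation-overridden -require-in-module -deprecated".

Module NT.
Set Warnings "-notation-overridden -require-in-module".
From mathcomp Require Import ssreflect ssrbool ssrfun eqtype ssrnat div prime binomial bigop.
From mathcomp Require Import zify.

Lemma sum_le_min T n : \sum_(1 <= k < n.+1) (k <= T) = minn n T.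
Proof.
elim: n => [|n IH]; first by rewrite big_geq // min0n.
rewrite big_nat_recr //= IH. case: (leqP n.+1 T) => H /=; lia.
Qed.

Lemma logn_fact_ext p a N : prime p -> a <= N ->
  logn p a`! = \sum_(1 <= k < N.+1) a %/ p ^ k.
Proof.
move=> pr aN; rewrite logn_fact // [RHS](@big_cat_nat _ _ _ a.+1) //=.
rewrite [X in _ = _ + X]big1_seq ?addn0 // => k /andP[_]; rewrite mem_index_iota => /andP[h1 _].
apply: divn_small. apply: leq_trans (ltn_expl k (prime_gt1 pr)). lia.
Qed.

Lemma logn_bin p N K : prime p -> K <= N -> logn p 'C(N, K) <= trunc_log p N.
Proof.
move=> pr KN.
have p1 : 1 < p by apply: prime_gt1.
have E : logn p N`! = logn p 'C(N, K) + logn p K`! + logn p (N - K)`!.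
  rewrite -(bin_fact KN) lognM ?bin_gt0 ?muln_gt0 ?fact_gt0 // lognM ?fact_gt0 //; lia.
rewrite (logn_fact_ext p N N pr (leqnn N)) (logn_fact_ext p K N pr KN) (logn_fact_ext p (N - K) N pr (leq_subr K N)) in E.
have H : \sum_(1 <= k < N.+1) N %/ p ^ k <=
   \sum_(1 <= k < N.+1) (K %/ p ^ k + (N - K) %/ p ^ k + (k <= trunc_log p N)).
  apply: leq_sum => k _.
  have pk : 0 < p ^ k by rewrite expn_gt0; lia.
  case: (leqP (p ^ k) N) => hk.
    have -> : (k <= trunc_log p N) = true by apply: trunc_log_max.
    rewrite -{1}(subnKC KN) divnD //.
    have : ((p ^ k <= K %% p ^ k + (N - K) %% p ^ k) : nat) <= 1 by exact: leq_b1.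
    lia.
  rewrite divn_small //.
rewrite !big_split /= sum_le_min in H. lia.
Qed.

Lemma bin_dvd N K x : K <= N -> 0 < x -> (forall q, 0 < q <= N -> q %| x) -> 'C(N, K) %| x.
Proof.
move=> KN x0 Hx.
have C0 : 0 < 'C(N, K) by rewrite bin_gt0.
apply/dvdn_partP => // p; rewrite mem_primes => /and3P[pr _ _].
rewrite p_part.
apply: (dvdn_trans (dvdn_exp2l p (logn_bin p N K pr KN))).
case: (posnP N) => [->|Npos]; first by rewrite trunc_log0 expn0 dvd1n.
apply: Hx. rewrite expn_gt0 prime_gt0 //=. apply: trunc_logP => //. exact: prime_gt1.
Qed.

Lemma bin_bound_std M x : (0 < x)%coq_nat ->
  (forall q, (1 <= q)%coq_nat -> (q <= 2 * M)%coq_nat -> Nat.divide q x) ->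
  (binomial (2 * M) M <= x)%coq_nat.
Proof.
move=> /ltP x0 H. apply/leP. apply: dvdn_leq => //. apply: bin_dvd => //; first by lia.
move=> q /andP[q0 qN]. have [c ->] : Nat.divide q x by apply: H; apply/leP.
apply: dvdn_mull. exact: dvdnn.
Qed.

Lemma powE a n : Nat.pow a n = a ^ n.
Proof. by elim: n => //= n IH; rewrite expnS -IH. Qed.

Lemma bin_lower M : (Nat.pow 4 M <= (2 * M + 1) * binomial (2 * M) M)%coq_nat.
Proof.
apply/leP. rewrite powE.
elim: M => [|m IH]; first by rewrite bin0.
have e1 : (2 * m + 1) * 'C(2 * m, m) = m.+1 * 'C((2 * m).+1, m.+1).
  have := mul_bin_diag (2 * m).+1 m. rewrite /=. lia.
have e2 : 'C((2 * m).+1, m.+1) = 'C((2 * m).+1, m).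
  rewrite -bin_sub; last by lia. congr binomial; lia.
have e3 : (2 * m.+1) * 'C((2 * m).+1, m) = m.+1 * 'C(2 * m.+1, m.+1).
  have := mul_bin_diag (2 * m.+1) m. have -> : (2 * m.+1).-1 = (2*m).+1 by lia. by [].
rewrite expnS. set X := 'C(2 * m, m) in IH e1. set Y := 'C((2 * m).+1, m) in e2 e3.
set Z := 'C(2 * m.+1, m.+1) in e3 *. rewrite e2 in e1.
have eZ : Z = 2 * Y by nia.
nia.
Qed.
End NT.
Lemma bin_bound M x : 0 < x -> (forall q, 1 <= q -> q <= 2 * M -> Nat.divide q x) ->
  binomial.binomial (2 * M) M <= x.
Proof. exact (NT.bin_bound_std M x). Qed.
Lemma bin_low M : 4 ^ M <= (2 * M + 1) * binomial.binomial (2 * M) M.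
Proof. exact (NT.bin_lower M). Qed.
Definition pw (v : list bool) : lasso := ([], map (fun (b : bool) (_ : prop) => b) v).
Definition bitw (v : list bool) (j : nat) : bool := nth (j mod length v) v false.

Lemma nth_map_letter (v : list bool) i r :
  nth i (map (fun (b : bool) (_ : prop) => b) v) (fun _ => false) r = nth i v false.
Proof. revert i; induction v as [|b v IH]; intros [|i]; simpl; auto. Qed.

Lemma letter_pw v j r : letter_at (pw v) j r = bitw v j.
Proof.
  unfold letter_at, pw, bitw. simpl. rewrite Nat.sub_0_r, length_map. apply nth_map_letter.
Qed.

Fixpoint ssat (s : nat -> bool) (j : nat) (f : ltl) : Prop :=
  match f with
  | Atom _ => s j = true
  | Not g => ~ ssat s j g
  | Next g => ssat s (S j) g
  | Fin g => exists i, j <= i /\ ssat s i g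
  | Glob g => forall i, j <= i -> ssat s i g
  | Or g h => ssat s j g \/ ssat s j h
  | And g h => ssat s j g /\ ssat s j h
  | Until g h => exists i, j <= i /\ ssat s i h /\ forall k, j <= k -> k < i -> ssat s k g
  end.

Lemma sat_pw v f : v <> [] -> forall j, (sat (pw v) j f <-> ssat (bitw v) j f).
Proof.
  intros Hv. destruct v as [|b v']; [congruence|]. clear Hv.
  assert (HL : forall i, lt_len (pw (b :: v')) i) by (intros; exact I).
  induction f as [r|g IH|g IH|g IH|g IH|g1 IH1 g2 IH2|g1 IH1 g2 IH2|g1 IH1 g2 IH2];
    intros j; cbn [sat ssat].
  - unfold models. rewrite letter_pw. tauto.
  - rewrite IH. tauto.
  - rewrite IH. split; [intros [_ H]; auto | intros H; split; [apply HL|auto]].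
  - split; intros [i Hi]; exists i; rewrite IH in *; [tauto|]. split; [tauto|split; [apply HL|tauto]].
  - split; intros H i Hi; [rewrite <- IH; apply H; auto | intros _; rewrite IH; apply H; auto].
  - rewrite IH1, IH2. tauto.
  - rewrite IH1, IH2. tauto.
  - split; intros [i Hi]; exists i; simpl in *.
    + destruct Hi as [H1 [_ [H3 H4]]]. rewrite IH2 in H3. split; [auto|split; [auto|]].
      intros k Hk1 Hk2. rewrite <- IH1. auto.
    + destruct Hi as [H1 [H3 H4]]. rewrite <- IH2 in H3. split; [auto|split; [apply HL|split; [auto|]]].
      intros k Hk1 Hk2. rewrite IH1. auto.
Qed.

Lemma ssat_ext s1 s2 f : (forall j, s1 j = s2 j) -> forall j, (ssat s1 j f <-> ssat s2 j f).
Proof.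
  intros E. induction f as [r|g IH|g IH|g IH|g IH|g1 IH1 g2 IH2|g1 IH1 g2 IH2|g1 IH1 g2 IH2];
    intros j; simpl.
  - rewrite E; tauto.
  - rewrite IH; tauto.
  - rewrite IH; tauto.
  - split; intros [i Hi]; exists i; rewrite IH in *; tauto.
  - split; intros H i Hi; [rewrite <- IH|rewrite IH]; auto.
  - rewrite IH1, IH2; tauto.
  - rewrite IH1, IH2; tauto.
  - split; intros [i [H1 [H2 H3]]]; exists i; split; auto; split; [rewrite <- IH2; auto| |rewrite IH2; auto|];
    intros k Hk1 Hk2; [rewrite <- IH1|rewrite IH1]; auto.
Qed.

Definition Pst (q j : nat) : bool := Nat.eqb (j mod q) (q - 1).
Definition Nst (j : nat) : bool := Nat.eqb (j mod 2) 0.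
Definition vP (q : nat) : list bool := repeat false (q - 1) ++ [true].
Definition vN : list bool := [true; false].
Definition cv (c : bool) (v : list bool) : list bool := if c then map negb v else v.

Lemma cv_nonnil c v : v <> [] -> cv c v <> [].
Proof. destruct c; simpl; auto. destruct v; simpl; congruence. Qed.

Lemma vP_nonnil q : vP q <> [].
Proof. unfold vP. destruct (repeat false (q - 1)); simpl; congruence. Qed.

Lemma vN_nonnil : vN <> [].
Proof. unfold vN; congruence. Qed.

Lemma bitw_cv c v j : v <> [] -> bitw (cv c v) j = xorb c (bitw v j).
Proof.
  intros Hv. destruct c; simpl; [|destruct (bitw v j); reflexivity].
  unfold bitw. rewrite length_map.
  assert (Hl : length v <> 0) by (destruct v; simpl; congruence).
  assert (Hi := Nat.mod_upper_bound j (length v) Hl).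
  rewrite (nth_indep _ false (negb false)) by (rewrite length_map; auto).
  rewrite map_nth. destruct (nth _ v false); reflexivity.
Qed.

Lemma bitw_vP q j : 1 <= q -> bitw (vP q) j = Pst q j.
Proof.
  intros Hq. unfold bitw, vP, Pst.
  rewrite length_app, repeat_length. simpl length.
  replace (q - 1 + 1) with q by lia.
  assert (Hi := Nat.mod_upper_bound j q ltac:(lia)).
  destruct (Nat.lt_ge_cases (j mod q) (q - 1)) as [H|H].
  - rewrite app_nth1 by (rewrite repeat_length; auto). rewrite nth_repeat.
    symmetry; apply Nat.eqb_neq; lia.
  - rewrite app_nth2 by (rewrite repeat_length; auto). rewrite repeat_length.
    replace (j mod q - (q - 1)) with 0 by lia. simpl.
    symmetry; apply Nat.eqb_eq; lia.
Qed.

Lemma bitw_vN j : bitw vN j = Nst j.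
Proof.
  unfold bitw, vN, Nst. simpl length.
  assert (Hi := Nat.mod_upper_bound j 2 ltac:(lia)).
  destruct (j mod 2) as [|[|k]]; simpl; auto. lia.
Qed.

Definition Pw (c : bool) (q : nat) : lasso := pw (cv c (vP q)).
Definition Nw (c : bool) : lasso := pw (cv c vN).

Lemma letter_Pw c q j r : 1 <= q -> letter_at (Pw c q) j r = xorb c (Pst q j).
Proof. intros Hq. unfold Pw. rewrite letter_pw, bitw_cv, bitw_vP; auto. apply vP_nonnil. Qed.

Lemma letter_Nw c j r : letter_at (Nw c) j r = xorb c (Nst j).
Proof. unfold Nw. rewrite letter_pw, bitw_cv, bitw_vN; auto. apply vN_nonnil. Qed.

Lemma sat_Pw c q f j : 1 <= q -> (sat (Pw c q) j f <-> ssat (fun i => xorb c (Pst q i)) j f).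
Proof.
  intros Hq. unfold Pw. rewrite sat_pw by (apply cv_nonnil, vP_nonnil).
  apply ssat_ext. intros i. rewrite bitw_cv, bitw_vP; auto. apply vP_nonnil.
Qed.

Lemma sat_Nw c f j : sat (Nw c) j f <-> ssat (fun i => xorb c (Nst i)) j f.
Proof.
  unfold Nw. rewrite sat_pw by (apply cv_nonnil, vN_nonnil).
  apply ssat_ext. intros i. rewrite bitw_cv, bitw_vN; auto. apply vN_nonnil.
Qed.

Fixpoint ht (f : ltl) : nat :=
  match f with
  | Atom _ => 1
  | Not g | Next g | Fin g | Glob g => S (ht g)
  | Or g h | And g h | Until g h => S (Nat.max (ht g) (ht h))
  end.

Lemma sub_ht f : forall h, 1 <= h <= ht f -> exists g, In g (subf f) /\ ht g = h.
Proof.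
  induction f as [r|g IH|g IH|g IH|g IH|g1 IH1 g2 IH2|g1 IH1 g2 IH2|g1 IH1 g2 IH2];
    intros h Hh; simpl in Hh;
  try (destruct (Nat.eq_dec h (S (ht g))) as [E|E];
       [ eexists; split; [simpl; left; reflexivity | simpl; lia]
       | destruct (IH h ltac:(lia)) as [g' [Hg1 Hg2]]; exists g'; split; [simpl; right; auto | auto]]);
  try (destruct (Nat.eq_dec h (S (Nat.max (ht g1) (ht g2)))) as [E|E];
       [ eexists; split; [simpl; left; reflexivity | simpl; lia]
       | destruct (Nat.le_gt_cases h (ht g1)) as [L|L];
         [ destruct (IH1 h ltac:(lia)) as [g' [Hg1 Hg2]]; exists g'; split;
           [simpl; right; apply in_or_app; left; auto | auto]
         | destruct (IH2 h ltac:(lia)) as [g' [Hg1 Hg2]]; exists g'; split;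
           [simpl; right; apply in_or_app; right; auto | auto]]]).
  exists (Atom r); split; [simpl; left; reflexivity | simpl; lia].
Qed.

Lemma ht_le_sz f : ht f <= sz f.
Proof.
  unfold sz.
  rewrite <- (length_seq (ht f) 1) at 1.
  rewrite <- (length_map ht (nodup ltl_eq_dec (subf f))).
  apply NoDup_incl_length; [apply seq_NoDup|].
  intros h Hh. apply in_seq in Hh.
  destruct (sub_ht f h ltac:(lia)) as [g [Hg1 Hg2]].
  apply in_map_iff. exists g. split; auto. apply nodup_In; auto.
Qed.

Fixpoint nX (n : nat) (g : ltl) : ltl :=
  match n with 0 => g | S m => Next (nX m g) end.

Lemma ssat_nX s n g : forall j, ssat s j (nX n g) <-> ssat s (n + j) g.
Proof.
  induction n as [|n IH]; intros j; simpl; [tauto|].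
  rewrite IH. replace (n + S j) with (S (n + j)) by lia. tauto.
Qed.

Lemma in_frag_nX (O : op -> Prop) n g : O OX -> in_frag O g -> in_frag O (nX n g).
Proof. intros HX Hg; induction n; simpl; auto. Qed.

Definition Good (qs : list nat) (h y : nat) (x : nat -> nat) : Prop :=
  forall t, t < h -> (forall q, In q qs -> Pst q (x q + t) = true) -> Nst (y + t) = true.

Lemma m2 a : exists c, (a = 2 * c /\ a mod 2 = 0) \/ (a = 2 * c + 1 /\ a mod 2 = 1).
Proof.
  pose proof (Nat.div_mod_eq a 2) as E.
  pose proof (Nat.mod_upper_bound a 2 ltac:(lia)) as B.
  exists (a / 2). destruct (a mod 2) as [|[|k]]; [left|right|]; lia.
Qed.

Lemma m2u0 a c : a = 2 * c -> a mod 2 = 0.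
Proof. intros E. symmetry. apply (Nat.mod_unique a 2 c 0); lia. Qed.
Lemma m2u1 a c : a = 2 * c + 1 -> a mod 2 = 1.
Proof. intros E. symmetry. apply (Nat.mod_unique a 2 c 1); lia. Qed.

Lemma par1 a b : Pst 2 a = true -> Nst (a + 1 + 2 * b) = true.
Proof.
  unfold Pst, Nst. simpl (2 - 1). rewrite !Nat.eqb_eq. intros H.
  destruct (m2 a) as [c [[E1 E2]|[E1 E2]]]; [lia|].
  apply (m2u0 _ (c + 1 + b)). lia.
Qed.

Lemma par2 a b : Pst 2 (a + 1 + 2 * b) = true -> Nst a = true.
Proof.
  unfold Pst, Nst. simpl (2 - 1). rewrite !Nat.eqb_eq. intros H.
  destruct (m2 a) as [c [[E1 E2]|[E1 E2]]]; [auto|].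
  rewrite (m2u0 _ (c + 1 + b)) in H; lia.
Qed.

Lemma Good_shift qs h y x : Good qs h y x -> Good qs (h - 1) (S y) (fun q => S (x q)).
Proof.
  intros HG t Ht Hall. replace (S y + t) with (y + S t) by lia.
  apply HG; [lia|]. intros q Hq. replace (x q + S t) with (S (x q) + t) by lia. apply Hall; auto.
Qed.

Lemma GoodA qs h b zf : In 2 qs -> Good qs h (zf 2 + 1 + 2 * b) zf.
Proof.
  intros H2 t Ht Hall. specialize (Hall 2 H2).
  replace (zf 2 + 1 + 2 * b + t) with ((zf 2 + t) + 1 + 2 * b) by lia. apply par1; auto.
Qed.

Lemma GoodB qs h z x : In 2 qs -> Good qs h z (fun q => if q =? 2 then z + 1 + 2 * x 2 else x q).
Proof.
  intros H2 t Ht Hall. specialize (Hall 2 H2). simpl in Hall.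
  apply (par2 _ (x 2)). replace (z + t + 1 + 2 * x 2) with (z + 1 + 2 * x 2 + t) by lia. auto.
Qed.

Lemma choice_list (l : list nat) (R : nat -> nat -> Prop) :
  (forall q, In q l -> exists i, R q i) -> exists f, forall q, In q l -> R q (f q).
Proof.
  induction l as [|a l IH]; intros H.
  - exists (fun _ => 0). intros q [].
  - destruct (H a (or_introl eq_refl)) as [ia Ha].
    destruct IH as [f Hf]. { intros q Hq. apply H. right; auto. }
    exists (fun q => if q =? a then ia else f q). intros q [Hq|Hq].
    + subst. rewrite Nat.eqb_refl. auto.
    + destruct (q =? a) eqn:E; [apply Nat.eqb_eq in E; subst; auto | auto].
Qed.

Lemma lemA (qs : list nat) (H2 : In 2 qs) (O : op -> Prop)
  (HnOr : ~ O OOr) (HnNot : ~ O ONot) (HnU : ~ O OU) :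
  forall f, in_frag O f -> forall h y x, ht f <= h -> Good qs h y x ->
   (forall q, In q qs -> ssat (Pst q) (x q) f) -> ssat Nst y f.
Proof.
  induction f as [r|g IH|g IH|g IH|g IH|g1 IH1 g2 IH2|g1 IH1 g2 IH2|g1 IH1 g2 IH2];
    intros Hf h y x Hh HG HP; simpl in *.
  - specialize (HG 0). rewrite Nat.add_0_r in HG. apply HG; [lia|].
    intros q Hq. rewrite Nat.add_0_r. apply HP; auto.
  - tauto.
  - destruct Hf as [_ Hg]. apply (IH Hg (h - 1) (S y) (fun q => S (x q))); [lia| |auto].
    apply Good_shift; auto.
  - destruct Hf as [_ Hg].
    destruct (choice_list qs (fun q i => x q <= i /\ ssat (Pst q) i g) HP) as [zf Hzf].
    exists (zf 2 + 1 + 2 * y). split; [lia|].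
    apply (IH Hg (h - 1) _ zf); [lia | apply GoodA; auto | intros q Hq; apply Hzf; auto].
  - destruct Hf as [_ Hg]. intros z Hz.
    apply (IH Hg (h - 1) z (fun q => if q =? 2 then z + 1 + 2 * x 2 else x q));
      [lia | apply GoodB; auto |].
    intros q Hq. destruct (q =? 2) eqn:E.
    + apply Nat.eqb_eq in E; subst. apply HP; auto; lia.
    + apply HP; auto.
  - tauto.
  - destruct Hf as [_ [Hg1 Hg2]]. split.
    + apply (IH1 Hg1 h y x); [lia|auto|]. intros q Hq; apply HP; auto.
    + apply (IH2 Hg2 h y x); [lia|auto|]. intros q Hq; apply HP; auto.
  - tauto.
Qed.

Lemma lemB (qs : list nat) (H2 : In 2 qs) (O : op -> Prop)
  (HnAnd : ~ O OAnd) (HnNot : ~ O ONot) (HnU : ~ O OU) :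
  forall f, in_frag O f -> forall h y x, ht f <= h -> Good qs h y x ->
   ssat (fun j => negb (Nst j)) y f ->
   exists q, In q qs /\ ssat (fun j => negb (Pst q j)) (x q) f.
Proof.
  induction f as [r|g IH|g IH|g IH|g IH|g1 IH1 g2 IH2|g1 IH1 g2 IH2|g1 IH1 g2 IH2];
    intros Hf h y x Hh HG HS; simpl in *.
  - destruct (classic (exists q, In q qs /\ Pst q (x q) = false)) as [[q [Hq HPq]]|Hno].
    + exists q. split; auto. rewrite HPq. reflexivity.
    + exfalso. specialize (HG 0). rewrite Nat.add_0_r in HG.
      assert (Nst y = true) as E.
      { apply HG; [lia|]. intros q Hq. rewrite Nat.add_0_r.
        destruct (Pst q (x q)) eqn:E; auto. exfalso; apply Hno; eauto. }
      rewrite E in HS. discriminate.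
  - tauto.
  - destruct Hf as [_ Hg].
    apply (IH Hg (h - 1) (S y) (fun q => S (x q))); [lia| |auto]. apply Good_shift; auto.
  - destruct Hf as [_ Hg]. destruct HS as [i [Hi HSi]].
    destruct (IH Hg (h - 1) i (fun q => if q =? 2 then i + 1 + 2 * x 2 else x q))
      as [q [Hq Hsq]]; [lia | apply GoodB; auto | auto |].
    exists q. split; auto. eexists. split; [|exact Hsq].
    destruct (q =? 2) eqn:E; [apply Nat.eqb_eq in E; subst; lia | lia].
  - destruct Hf as [_ Hg].
    destruct (classic (exists q, In q qs /\ forall i, x q <= i -> ssat (fun j => negb (Pst q j)) i g))
      as [Hy|Hno]; auto.
    exfalso.
    assert (HC : forall q, In q qs -> exists i, x q <= i /\ ~ ssat (fun j => negb (Pst q j)) i g).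
    { intros q Hq. apply NNPP. intros Hc. apply Hno. exists q. split; auto.
      intros i Hi. apply NNPP. intros Hn. apply Hc. exists i. auto. }
    destruct (choice_list qs _ HC) as [zf Hzf].
    destruct (IH Hg (h - 1) (zf 2 + 1 + 2 * y) zf) as [q [Hq Hsq]];
      [lia | apply GoodA; auto | apply HS; lia |].
    apply (Hzf q Hq). auto.
  - destruct Hf as [_ [Hg1 Hg2]]. destruct HS as [HS|HS].
    + destruct (IH1 Hg1 h y x) as [q [Hq Hsq]]; [lia|auto|auto|]. exists q; auto.
    + destruct (IH2 Hg2 h y x) as [q [Hq Hsq]]; [lia|auto|auto|]. exists q; auto.
  - tauto.
  - tauto.
Qed.

Lemma Pst_div q t : 1 <= q -> Pst q t = true -> Nat.divide q (S t).
Proof.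
  intros Hq H. unfold Pst in H. apply Nat.eqb_eq in H.
  pose proof (Nat.div_mod_eq t q) as E.
  exists (t / q + 1). nia.
Qed.

Lemma div_fact q N : 1 <= q -> q <= N -> Nat.divide q (fact N).
Proof.
  intros H1. induction N as [|N IH]; intros H2; [lia|].
  simpl fact. destruct (Nat.eq_dec q (S N)) as [E|E].
  - subst. exists (fact N). simpl. lia.
  - apply Nat.divide_add_r; [apply IH; lia|]. apply Nat.divide_mul_r. apply IH; lia.
Qed.

Lemma Pst_fact q N : 1 <= q -> q <= N -> Pst q (fact N - 1) = true.
Proof.
  intros H1 H2. destruct (div_fact q N H1 H2) as [r Hr].
  pose proof (lt_O_fact N) as F.
  unfold Pst. apply Nat.eqb_eq. symmetry.
  apply (Nat.mod_unique _ q (r - 1) (q - 1)); [lia|].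
  destruct r; [lia|]. nia.
Qed.

Definition qsM (M : nat) : list nat := seq 2 (2 * M - 1).

Lemma In_qs M q : 1 <= M -> (In q (qsM M) <-> 2 <= q <= 2 * M).
Proof. intros HM. unfold qsM. rewrite in_seq. lia. Qed.

Lemma Good_init M h : 1 <= M -> h < binomial.binomial (2 * M) M -> Good (qsM M) h 0 (fun _ => 0).
Proof.
  intros HM Hh t Ht Hall. exfalso.
  assert (binomial.binomial (2 * M) M <= S t); [|lia].
  apply bin_bound; [lia|]. intros q Hq1 Hq2.
  destruct (Nat.eq_dec q 1) as [E|E]; [subst; apply Nat.divide_1_l|].
  apply Pst_div; [lia|]. apply (Hall q). apply In_qs; lia.
Qed.

Lemma sample_size_app a b : sample_size (a ++ b) = sample_size a + sample_size b.
Proof. induction a as [|w a IH]; simpl; auto. rewrite IH. lia. Qed.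

Lemma length_cv c v : length (cv c v) = length v.
Proof. destruct c; simpl; auto. apply length_map. Qed.

Lemma sample_size_Pw c s k : 1 <= s -> 2 * sample_size (map (Pw c) (seq s k)) = k * (2 * s + k - 1).
Proof.
  revert s; induction k as [|k IH]; intros s Hs; [reflexivity|].
  specialize (IH (S s) ltac:(lia)).
  change (seq s (S k)) with (s :: seq (S s) k).
  change (map (Pw c) (s :: seq (S s) k)) with (Pw c s :: map (Pw c) (seq (S s) k)).
  change (sample_size (Pw c s :: map (Pw c) (seq (S s) k))) with
    (length (fst (Pw c s)) + length (snd (Pw c s)) + sample_size (map (Pw c) (seq (S s) k))).
  assert (E : length (fst (Pw c s)) + length (snd (Pw c s)) = s).
  { unfold Pw, pw. simpl fst. simpl snd. rewrite length_map, length_cv.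
    unfold vP. rewrite length_app, repeat_length. simpl. lia. }
  rewrite E. nia.
Qed.

Lemma valid_pw v : v <> [] -> valid_lasso (pw v).
Proof. intros Hv. unfold valid_lasso, pw. simpl. destruct v; simpl; congruence. Qed.

Lemma not_weq w1 w2 i r : lt_len w1 i -> letter_at w1 i r <> letter_at w2 i r -> ~ word_eq w1 w2.
Proof. intros Hl Hn [_ H]. apply Hn. apply H; auto. Qed.

Lemma lt_len_pw v i : v <> [] -> lt_len (pw v) i.
Proof. intros H; destruct v; [congruence| exact I]. Qed.

Lemma lt_len_Pw c q i : lt_len (Pw c q) i.
Proof. apply lt_len_pw, cv_nonnil, vP_nonnil. Qed.

Lemma lt_len_Nw c i : lt_len (Nw c) i.
Proof. apply lt_len_pw, cv_nonnil, vN_nonnil. Qed.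

Lemma xorb_neq c a b : a <> b -> xorb c a <> xorb c b.
Proof. destruct c, a, b; simpl; congruence. Qed.

Lemma Pw_neq c a b : 2 <= a -> a < b -> ~ word_eq (Pw c a) (Pw c b).
Proof.
  intros Ha Hb. apply (not_weq _ _ (a - 1) p); [apply lt_len_Pw|].
  rewrite !letter_Pw by lia. apply xorb_neq. unfold Pst.
  rewrite !Nat.mod_small by lia.
  rewrite Nat.eqb_refl. intros E. symmetry in E. apply Nat.eqb_eq in E. lia.
Qed.

Lemma Pw_Nw_neq c a : 2 <= a -> ~ word_eq (Pw c a) (Nw c).
Proof.
  intros Ha. apply (not_weq _ _ 0 p); [apply lt_len_Pw|].
  rewrite letter_Pw, letter_Nw by lia. apply xorb_neq. unfold Pst, Nst.
  rewrite !Nat.Div0.mod_0_l. rewrite (proj2 (Nat.eqb_neq 0 (a - 1))) by lia. simpl. congruence.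
Qed.

Lemma Nw_Pw_neq c a : 2 <= a -> ~ word_eq (Nw c) (Pw c a).
Proof.
  intros Ha. apply (not_weq _ _ 0 p); [apply lt_len_Nw|].
  rewrite letter_Pw, letter_Nw by lia. apply xorb_neq. unfold Pst, Nst.
  rewrite !Nat.Div0.mod_0_l. rewrite (proj2 (Nat.eqb_neq 0 (a - 1))) by lia. simpl. congruence.
Qed.

Lemma distinct_Pw c s k : 2 <= s -> distinct_words (map (Pw c) (seq s k)).
Proof.
  revert s; induction k as [|k IH]; intros s Hs; simpl; auto.
  split; [|apply IH; lia].
  apply Forall_forall. intros w Hw. apply in_map_iff in Hw. destruct Hw as [b [Eb Hb]].
  subst. apply in_seq in Hb. apply Pw_neq; lia.
Qed.

Lemma distinct_app1 l w : distinct_words l -> Forall (fun w' => ~ word_eq w' w) l ->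
  distinct_words (l ++ [w]).
Proof.
  induction l as [|a l IH]; intros Hd Hf; simpl in *.
  - split; auto.
  - destruct Hd as [Hd1 Hd2]. inversion Hf; subst. split; [|apply IH; auto].
    apply Forall_app. split; auto.
Qed.

Lemma real_bound k s j : 5 <= j -> k <= 9 * j * j -> 8 ^ j < s ->
  (Rpower 2 (sqrt (INR k)) < INR s)%R.
Proof.
  intros Hj Hk Hs.
  apply (Rle_lt_trans _ (Rpower 2 (INR (3 * j)))).
  - apply Rle_Rpower; [lra|].
    rewrite <- (sqrt_pow2 (INR (3 * j))) by apply pos_INR.
    apply sqrt_le_1_alt. rewrite <- pow_INR. apply le_INR. simpl. nia.
  - rewrite Rpower_pow by lra. replace 2%R with (INR 2) by reflexivity.
    rewrite <- pow_INR. apply lt_INR. rewrite Nat.pow_mul_r. simpl (2 ^ 3). auto.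
Qed.

Lemma pow2_big j : 5 <= j -> 4 * j + 1 < 2 ^ j.
Proof.
  intros Hj. induction Hj as [|j Hj IH]; simpl; [lia|]. 
  assert (4 < 2 ^ j). { clear IH. induction Hj; simpl; lia. }
  lia.
Qed.

Lemma C_big j : 5 <= j -> 8 ^ j < binomial.binomial (2 * (2 * j)) (2 * j).
Proof.
  intros Hj. pose proof (bin_low (2 * j)) as B.
  rewrite Nat.pow_mul_r in B. simpl (4 ^ 2) in B.
  replace 16 with (8 * 2) in B by reflexivity. rewrite Nat.pow_mul_l in B.
  pose proof (pow2_big j Hj) as P.
  set (C := binomial.binomial (2 * (2 * j)) (2 * j)) in *.
  set (a := 8 ^ j) in *. set (b := 2 ^ j) in *.
  assert (0 < a) by (unfold a; apply Nat.neq_0_lt_0, Nat.pow_nonzero; lia).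
  nia.
Qed.

Lemma xorb_true_negb b : xorb true b = negb b.
Proof. destruct b; reflexivity. Qed.
Lemma xorb_false_id b : xorb false b = b.
Proof. destruct b; reflexivity. Qed.

Lemma size_facts c j : 5 <= j ->
  let k := 2 + sample_size (map (Pw c) (qsM (2 * j))) in j <= k /\ k <= 9 * j * j.
Proof.
  intros Hj k. unfold k, qsM.
  pose proof (sample_size_Pw c 2 (2 * (2 * j) - 1) ltac:(lia)) as E.
  replace (2 * (2 * j) - 1) with (4 * j - 1) in * by lia.
  replace (2 * 2 + (4 * j - 1) - 1) with (4 * j + 2) in E by lia.
  destruct j as [|j']; [lia|].
  replace (4 * S j' - 1) with (4 * j' + 3) in * by lia.
  nia.
Qed.

Theorem proposition4 :
  forall O : op -> Prop,
    monotone O -> O OX -> ~ O OU -> (exists q, O (OAtom q)) ->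
    forall n : nat,
      exists P N : list lasso,
        Forall valid_lasso (P ++ N) /\
        distinct_words (P ++ N) /\
        n <= sample_size (P ++ N) /\
        (exists f, in_frag O f /\ separates P N f) /\
        (forall f, in_frag O f -> separates P N f ->
           (Rpower 2 (sqrt (INR (sample_size (P ++ N)))) < INR (sz f))%R).
Proof.
  intros O [HnNot HnOA] HX HnU [q0 Hq0] n.
  pose (j := n + 5). pose (M := 2 * j).
  assert (Hj : 5 <= j) by (unfold j; lia).
  assert (HM : 1 <= M) by (unfold M; lia).
  assert (H2 : In 2 (qsM M)) by (apply In_qs; lia).
  assert (HC : 8 ^ j < binomial.binomial (2 * M) M) by (unfold M; apply C_big; lia).
  pose (T := fact (2 * M) - 1).
  pose (f0 := nX T (Atom q0)).
  assert (Hf0 : in_frag O f0) by (apply in_frag_nX; simpl; auto).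
  assert (HPT : forall q, In q (qsM M) -> Pst q T = true).
  { intros q Hq. apply In_qs in Hq; [|lia]. apply Pst_fact; lia. }
  assert (HNT : Nst T = false).
  { pose proof (HPT 2 H2) as E. unfold Pst in E. unfold Nst. apply Nat.eqb_eq in E.
    replace (2 - 1) with 1 in E by reflexivity. rewrite E. reflexivity. }
  assert (Hq2 : forall q, In q (qsM M) -> 2 <= q).
  { intros q Hq. apply In_qs in Hq; lia. }
  destruct (classic (O OOr)) as [HOr|HnOr].
  - assert (HnAnd : ~ O OAnd) by tauto.
    exists [Nw true], (map (Pw true) (qsM M)).
    assert (Hk : sample_size ([Nw true] ++ map (Pw true) (qsM M)) =
                 2 + sample_size (map (Pw true) (qsM M))).
    { rewrite sample_size_app. reflexivity. }
    destruct (size_facts true j Hj) as [Hk1 Hk2].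
    fold M in Hk1, Hk2.
    rewrite Hk. split; [|split; [|split; [|split]]].
    + apply Forall_forall. intros w Hw. apply in_app_or in Hw. destruct Hw as [Hw|Hw].
      * destruct Hw as [<-|[]]. apply valid_pw, cv_nonnil, vN_nonnil.
      * apply in_map_iff in Hw. destruct Hw as [q [<- _]]. apply valid_pw, cv_nonnil, vP_nonnil.
    + cbn [app distinct_words]. split; [|apply distinct_Pw; lia].
      apply Forall_forall. intros w Hw. apply in_map_iff in Hw. destruct Hw as [q [<- Hq]].
      apply Nw_Pw_neq; auto.
    + lia.
    + exists f0. split; auto. split; apply Forall_forall.
      * intros w [<-|[]]. unfold models, f0. rewrite sat_Nw, ssat_nX. simpl.
        rewrite Nat.add_0_r, HNT. reflexivity.
      * intros w Hw. apply in_map_iff in Hw. destruct Hw as [q [<- Hq]].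
        specialize (Hq2 q Hq). unfold models, f0. rewrite sat_Pw, ssat_nX by lia. simpl.
        rewrite Nat.add_0_r, HPT by auto. simpl. discriminate.
    + intros f Hf [HPf HNf].
      assert (Hht : binomial.binomial (2 * M) M <= ht f).
      { destruct (Nat.le_gt_cases (binomial.binomial (2 * M) M) (ht f)) as [L|L]; auto. exfalso.
        assert (HG := Good_init M (ht f) HM L).
        assert (Hpos : ssat (fun i => negb (Nst i)) 0 f).
        { rewrite Forall_forall in HPf. specialize (HPf (Nw true) (or_introl eq_refl)).
          unfold models in HPf. rewrite sat_Nw in HPf.
          revert HPf. apply ssat_ext. intros i. apply xorb_true_negb. }
        destruct (lemB _ H2 O HnAnd HnNot HnU f Hf (ht f) 0 (fun _ => 0) (le_n _) HG Hpos)
          as [q [Hq Hsq]].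
        rewrite Forall_forall in HNf. apply (HNf (Pw true q)); [apply in_map; auto|].
        unfold models. rewrite sat_Pw by (specialize (Hq2 q Hq); lia).
        revert Hsq. apply ssat_ext. intros i. symmetry. apply xorb_true_negb. }
      apply (real_bound _ _ j); [lia| lia |].
      pose proof (ht_le_sz f). lia.
  - exists (map (Pw false) (qsM M)), [Nw false].
    assert (Hk : sample_size (map (Pw false) (qsM M) ++ [Nw false]) =
                 2 + sample_size (map (Pw false) (qsM M))).
    { rewrite sample_size_app. change (sample_size [Nw false]) with 2. lia. }
    destruct (size_facts false j Hj) as [Hk1 Hk2].
    fold M in Hk1, Hk2.
    rewrite Hk. split; [|split; [|split; [|split]]].
    + apply Forall_forall. intros w Hw. apply in_app_or in Hw. destruct Hw as [Hw|Hw].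
      * apply in_map_iff in Hw. destruct Hw as [q [<- _]]. apply valid_pw, cv_nonnil, vP_nonnil.
      * destruct Hw as [<-|[]]. apply valid_pw, cv_nonnil, vN_nonnil.
    + apply distinct_app1; [apply distinct_Pw; lia|].
      apply Forall_forall. intros w Hw. apply in_map_iff in Hw. destruct Hw as [q [<- Hq]].
      apply Pw_Nw_neq; auto.
    + lia.
    + exists f0. split; auto. split; apply Forall_forall.
      * intros w Hw. apply in_map_iff in Hw. destruct Hw as [q [<- Hq]].
        specialize (Hq2 q Hq). unfold models, f0. rewrite sat_Pw, ssat_nX by lia. simpl.
        rewrite Nat.add_0_r, HPT by auto. reflexivity.
      * intros w [<-|[]]. unfold models, f0. rewrite sat_Nw, ssat_nX. simpl.
        rewrite Nat.add_0_r, HNT. simpl. discriminate.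
    + intros f Hf [HPf HNf].
      assert (Hht : binomial.binomial (2 * M) M <= ht f).
      { destruct (Nat.le_gt_cases (binomial.binomial (2 * M) M) (ht f)) as [L|L]; auto. exfalso.
        assert (HG := Good_init M (ht f) HM L).
        assert (Hpos : forall q, In q (qsM M) -> ssat (Pst q) 0 f).
        { intros q Hq. rewrite Forall_forall in HPf.
          specialize (HPf (Pw false q) (in_map _ _ _ Hq)).
          unfold models in HPf. rewrite sat_Pw in HPf by (specialize (Hq2 q Hq); lia).
          revert HPf. apply ssat_ext. intros i. apply xorb_false_id. }
        assert (HN := lemA _ H2 O HnOr HnNot HnU f Hf (ht f) 0 (fun _ => 0) (le_n _) HG Hpos).
        rewrite Forall_forall in HNf. apply (HNf (Nw false) (or_introl eq_refl)).
        unfold models. rewrite sat_Nw.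
        revert HN. apply ssat_ext. intros i. symmetry. apply xorb_false_id. }
      apply (real_bound _ _ j); [lia| lia |].
      pose proof (ht_le_sz f). lia.
Qed.
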